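(* For every $n\geq 1$, \[\deg(\mathrm{nib}:S_n\to S_n)=\frac{(n-1)(n-2)^2+n^2}{n!}+\sum_{k=1}^{n-2}\frac{k(k^3-k+1)}{(k+2)!}.\] Furthermore, \[\lim_{n\to\infty}\deg(\mathrm{nib}:S_n\to S_n)=4e-9.\]
   Context: For finite sets $X,Y$ and $f:X\to Y$, $\deg(f)=\frac{1}{|X|}\sum_{y\in Y}|f^{-1}(y)|^2$. $S_n$ is the set of permutations $\pi=\pi_1\cdots\pi_n$ of $\{1,\dots,n\}$. A descent of $\pi$ is an index $i\in\{1,\dots,n-1\}$ with $\pi_i>\pi_{i+1}$. The nibble sort map $\mathrm{nib}:S_n\to S_n$ fixes the identity $12\cdots n$, and for $\pi\neq 12\cdots n$ with smallest descent $i$, $\mathrm{nib}(\pi)$ is obtained from $\pi$ by swapping $\pi_i$ and $\pi_{i+1}$. *)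

(* Defs.v *)
From HB Require Import structures.
From mathcomp Require Import all_boot all_order all_fingroup all_algebra.
From mathcomp Require Import all_classical all_reals all_analysis.
Set Implicit Arguments. Unset Strict Implicit. Unset Printing Implicit Defensive.
Import Order.TTheory GRing.Theory Num.Theory.
Local Open Scope ring_scope.

Definition deg {R : numFieldType} (X Y : finType) (f : X -> Y) : R :=
  (\sum_(y : Y) (#|[pred x | f x == y]| ^ 2))%N%:R / #|X|%:R.

(* Permutations of {1..n} are modelled by 'S_n = {perm 'I_n} (positions and
   values shifted to {0..n-1}).  Position i is a descent of s when there is a
   next position j = i+1 with s j < s i. *)
Definition is_descent n (s : 'S_n) (i : 'I_n) : bool :=
  [exists j : 'I_n, (val j == i.+1) && (s j < s i)%N].

(* nib: if s has a smallest descent i (with next position j = i+1),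
   swap the entries at positions i and j; otherwise (s = identity) fix s.
   (tperm i j * s) x = s (tperm i j x). *)
Definition nib n (s : 'S_n) : 'S_n :=
  match [pick ij : 'I_n * 'I_n |
          [&& val ij.2 == ij.1.+1, (s ij.2 < s ij.1)%N &
              [forall k : 'I_n, (k < ij.1)%N ==> ~~ is_descent s k]]] with
  | Some ij => (tperm ij.1 ij.2 * s)%g
  | None => s
  end.

(* Main.v *)
Require Import Defs.
From HB Require Import structures.
From mathcomp Require Import all_boot all_order all_fingroup all_algebra.
From mathcomp Require Import all_classical all_reals all_analysis.
From mathcomp Require Import zify ring lra.
Set Implicit Arguments. Unset Strict Implicit. Unset Printing Implicit Defensive.

Definition pv m (s : 'S_m.+1) (k : nat) : nat := s (inord k).

Lemma pvE m (s : 'S_m.+1) (x : 'I_m.+1) : pv s x = s x.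
Proof. by rewrite /pv inord_val. Qed.

Definition incb (f : nat -> nat) (i : nat) : bool :=
  [forall k' : 'I_i, forall k : 'I_k', (f k < f k')%N].

Definition condf (f : nat -> nat) (i : nat) : bool :=
  [forall k : 'I_i.+1, (f k < f i.+1)%N] && incb f i.

Definition cnt m (s : 'S_m.+1) : nat := \sum_(0 <= i < m) condf (pv s) i.

Lemma incb_tr f f' g i : (forall x, (x < i)%N -> f' x = g (f x)) ->
  (forall a b, (g a < g b)%N = (a < b)%N) -> incb f' i = incb f i.
Proof.
move=> E M; apply: eq_forallb => k'; apply: eq_forallb => k.
have hk' := ltn_ord k'; have hk := ltn_ord k.
by rewrite !E ?M //; apply: ltn_trans hk'.
Qed.

Lemma condf_tr f f' g i : (forall x, (x <= i.+1)%N -> f' x = g (f x)) ->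
  (forall a b, (g a < g b)%N = (a < b)%N) -> condf f' i = condf f i.
Proof.
move=> E M; rewrite /condf (@incb_tr f f' g) //; last first.
  by move=> x hx; apply: E; apply: ltnW; apply: ltnW.
congr (_ && _); apply: eq_forallb => k.
have hk := ltn_ord k.
by rewrite !E ?M //; apply: ltnW.
Qed.

Lemma bump_mono j a b : (bump j a < bump j b)%N = (a < b)%N.
Proof. rewrite /bump; case: (leqP j a); case: (leqP j b) => /= *; lia. Qed.

Lemma cons_inc (f : nat -> nat) i : (forall k, (k < i)%N -> (f k < f k.+1)%N) ->
  forall a b, (a < b)%N -> (b <= i)%N -> (f a < f b)%N.
Proof.
move=> H a; elim=> [//|b IH] ab bi.
rewrite ltnS leq_eqVlt in ab; case/orP: ab => [/eqP ->|ab]; first exact: H.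
apply: (ltn_trans (IH ab (ltnW bi))); exact: H.
Qed.

Lemma inc_perm1 m (s : 'S_m.+1) :
  (forall a b : 'I_m.+1, (a < b)%N -> (s a < s b)%N) -> s = 1%g.
Proof.
have ge (t : 'S_m.+1) : (forall a b : 'I_m.+1, (a < b)%N -> (t a < t b)%N) ->
    forall a : 'I_m.+1, (a <= t a)%N.
  move=> Ht; suff H : forall k (Hk : (k < m.+1)%N), (k <= t (Ordinal Hk))%N.
    by case=> a ha; apply: H.
  elim=> [//|k IH] Hk; have Hk' : (k < m.+1)%N by apply: ltnW.
  have := Ht (Ordinal Hk') (Ordinal Hk) (ltnSn k); have := IH Hk'; lia.
move=> Hs.
have Hi : forall a b : 'I_m.+1, (a < b)%N -> ((s^-1)%g a < (s^-1)%g b)%N.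
  move=> a b ab; rewrite ltnNge leq_eqVlt; apply/negP; case/orP.
    by move/eqP/val_inj/perm_inj => E; move: ab; rewrite E ltnn.
  by move/Hs; rewrite !permKV => ba; move: (ltn_trans ab ba); rewrite ltnn.
apply/permP => a; apply/val_inj; rewrite perm1 /=; apply/eqP.
by rewrite eqn_leq (ge s Hs) andbT; have := ge _ Hi (s a); rewrite permK.
Qed.

Lemma pv1 m k : (k <= m)%N -> pv (1%g : 'S_m.+1) k = k.
Proof. by move=> h; rewrite /pv perm1 inordK. Qed.

Definition tp m (i : nat) : 'S_m.+1 := tperm (inord i) (inord i.+1).

Lemma tp_val m i k : (i < m)%N -> (k <= m)%N ->
  val (tp m i (inord k)) = if k == i then i.+1 else if k == i.+1 then i else k.
Proof.
move=> im km; rewrite /tp.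
have inj a b : (a <= m)%N -> (b <= m)%N -> ((inord a : 'I_m.+1) == inord b) = (a == b).
  move=> ha hb; apply/eqP/eqP => [E|->//].
  by have := congr1 (@nat_of_ord _) E; rewrite !inordK.
case: eqP => [->|ne]; first by rewrite tpermL /= inordK.
case: eqP => [->|ne2]; first by rewrite tpermR /= inordK //; apply: ltnW.
rewrite tpermD; first by rewrite /= inordK.
  by rewrite inj //; [apply/eqP => E; apply: ne; rewrite E | apply: ltnW].
by rewrite inj //; apply/eqP => E; apply: ne2; rewrite E.
Qed.

Lemma pv_tp m (s : 'S_m.+1) i k : (i < m)%N -> (k <= m)%N ->
  pv (tp m i * s)%g k = pv s (if k == i then i.+1 else if k == i.+1 then i else k).
Proof.
by move=> im km; rewrite /pv permM -(@tp_val m i k) // inord_val.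
Qed.

Lemma pv_inj m (s : 'S_m.+1) a b : (a <= m)%N -> (b <= m)%N -> pv s a = pv s b -> a = b.
Proof.
move=> ha hb /val_inj/perm_inj E.
by have := congr1 (@nat_of_ord _) E; rewrite !inordK.
Qed.

Lemma desc_pv m (p : 'S_m.+1) (k : 'I_m.+1) :
  is_descent p k = (k < m)%N && (pv p k.+1 < pv p k)%N.
Proof.
rewrite /is_descent; apply/existsP/andP.
  case=> j /andP[/eqP hj lt].
  have km : (k < m)%N by have := ltn_ord j; rewrite hj.
  by split => //; rewrite -hj !pvE.
case=> km lt; exists (inord k.+1); rewrite /= inordK // eqxx /=.
by rewrite -!pvE inordK.
Qed.

Lemma nib_spec m (p : 'S_m.+1) :
  (exists2 i, (i < m)%N & [/\ (forall k, (k < i)%N -> (pv p k < pv p k.+1)%N),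
      (pv p i.+1 < pv p i)%N & nib p = (tp m i * p)%g])
  \/ (p = 1%g /\ nib p = p).
Proof.
rewrite /nib; case: pickP => [[i j] /= /and3P[/eqP hj lt /forallP nd] | none].
  have im : (i < m)%N by have := ltn_ord j; rewrite hj.
  left; exists (val i) => //; split.
  - move=> k ki.
    have km : (k <= m)%N by apply: ltnW; apply: leq_trans ki _; apply: ltnW.
    have := nd (inord k); rewrite inordK ?ki //= desc_pv inordK //.
    rewrite (ltn_trans ki im) /= -leqNgt leq_eqVlt => /orP[/eqP E|//].
    by have := pv_inj km (ltn_trans ki im) E; lia.
  - by rewrite -hj !pvE.
  - by rewrite /tp inord_val -hj inord_val.
right; suff -> : p = 1%g by [].
have C : forall k, (k <= m)%N -> forall k', (k' < k)%N -> (pv p k' < pv p k'.+1)%N.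
  elim=> [//|k IH] km k'; rewrite ltnS leq_eqVlt => /orP[/eqP ->|]; last first.
    by apply: IH; apply: ltnW.
  rewrite ltnNge; apply/negP => le.
  have := none (inord k, inord k.+1); rewrite /= !inordK //; last by apply: ltnW.
  rewrite eqxx /= -!pvE !inordK //; last by apply: ltnW.
  have -> : (pv p k.+1 < pv p k)%N.
    rewrite ltn_neqAle le andbT; apply/eqP => E.
    by have := pv_inj km (ltnW km) E; lia.
  move=> /= /negP; apply; apply/forallP => k0; apply/implyP => k0k.
  rewrite desc_pv negb_and -leqNgt; apply/orP; right.
  by rewrite -leqNgt; apply: ltnW; exact: IH (ltnW km) _ k0k.
apply: inc_perm1 => a b ab; rewrite -!pvE; apply: (cons_inc (i:=m)) => //.
  by move=> k km; apply: (C m).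
by rewrite -ltnS.
Qed.

Lemma pv_tp_i m (s : 'S_m.+1) i : (i < m)%N -> pv (tp m i * s)%g i = pv s i.+1.
Proof. by move=> im; rewrite pv_tp ?eqxx //; apply: ltnW. Qed.

Lemma pv_tp_S m (s : 'S_m.+1) i : (i < m)%N -> pv (tp m i * s)%g i.+1 = pv s i.
Proof. by move=> im; rewrite pv_tp // eqxx; case: eqP => // E; lia. Qed.

Lemma pv_tp_o m (s : 'S_m.+1) i k : (i < m)%N -> (k <= m)%N -> k <> i -> k <> i.+1 ->
  pv (tp m i * s)%g k = pv s k.
Proof. by move=> im km h1 h2; rewrite pv_tp //; do 2 case: eqP => //. Qed.

Lemma tpK m i (s : 'S_m.+1) : (tp m i * (tp m i * s))%g = s.
Proof. by rewrite mulgA /tp tperm2 mul1g. Qed.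

Lemma nib_eq m (p s : 'S_m.+1) : (nib p == s) =
  ((p == 1%g) && (s == 1%g)) || [exists i : 'I_m, condf (pv s) i && (p == tp m i * s)%g].
Proof.
apply/eqP/orP.
  move=> E; case: (nib_spec p) => [[i im [inc desc En]] | [p1 En]]; last first.
    by left; rewrite -E En p1 eqxx.
  right; apply/existsP; exists (Ordinal im) => /=.
  have Es : s = (tp m i * p)%g by rewrite -E En.
  have Ep : p = (tp m i * s)%g by rewrite Es tpK.
  rewrite -Ep eqxx andbT /condf; apply/andP; split.
    apply/forallP => k; have hk := ltn_ord k.
    rewrite Es pv_tp_S //.
    rewrite ltnS leq_eqVlt in hk; case/orP: hk => [/eqP ->|ki].
      by rewrite pv_tp_i.
    rewrite pv_tp_o //; try lia.
    by apply: (cons_inc inc).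
  apply/forallP => k'; apply/forallP => k.
  have hk := ltn_ord k; have hk' := ltn_ord k'.
  rewrite Es !pv_tp_o //; try lia.
  by apply: (cons_inc inc) => //; apply: ltnW.
case=> [/andP[/eqP p1 /eqP s1] | /existsP [i /andP [c /eqP Ep]]].
  rewrite p1 s1; case: (nib_spec (1%g : 'S_m.+1)) => [[i im [_ d _]] | [_ ->]] //.
  by move: d; rewrite !pv1 //; [rewrite ltnNge leqnSn | apply: ltnW].
have im := ltn_ord i.
case/andP: c => /forallP c1 /forallP c2.
case: (nib_spec p) => [[i' im' [inc desc En]] | [p1 En]]; last first.
  have := c1 ord_max; rewrite /=.
  have e1 : pv p i = pv s i.+1 by rewrite Ep pv_tp_i.
  have e2 : pv p i.+1 = pv s i by rewrite Ep pv_tp_S.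
  rewrite -e1 -e2 p1 !pv1 //; [by rewrite ltnNge leqnSn | by apply: ltnW].
have ii : i' = i.
  case: (ltngtP i' i) => [lt|gt|//].
    have a1 : pv (tp m i * s)%g i' = pv s i' by apply: pv_tp_o; lia.
    move: desc; rewrite Ep a1.
    case: (eqVneq i'.+1 i) => [e|ne].
      rewrite {1}e pv_tp_i // => d.
      by have := c1 (Ordinal (ltn_trans lt (ltnSn i))); rewrite /= ltnNge (ltnW d).
    have a2 : pv (tp m i * s)%g i'.+1 = pv s i'.+1 by apply: pv_tp_o; lia.
    rewrite a2 => d.
    have lt2 : (i'.+1 < i)%N by rewrite ltn_neqAle ne lt.
    have := c2 (Ordinal lt2); move/forallP => /(_ (Ordinal (ltnSn i'))) /=.
    by rewrite ltnNge (ltnW d).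
  have := inc i gt; rewrite Ep pv_tp_i // pv_tp_S // => d.
  by have := c1 ord_max; rewrite /= ltnNge (ltnW d).
by rewrite En ii Ep tpK.
Qed.

Lemma fib_card m (s : 'S_m.+1) : #|[pred p | nib p == s]| = (s == 1%g) + cnt s.
Proof.
have cA : #|[pred p : 'S_m.+1 | (p == 1%g) && (s == 1%g)]| = (s == 1%g).
  case: (eqVneq s 1%g) => [s1|ne].
    rewrite (eq_card (B := pred1 1%g)) ?card1 // => p; by rewrite !inE.
  by apply: eq_card0 => p; rewrite !inE andbF.
pose A := [pred p : 'S_m.+1 | (p == 1%g) && (s == 1%g)].
pose B := [pred p : 'S_m.+1 | [exists i : 'I_m, condf (pv s) i && (p == tp m i * s)%g]].
have -> : #|[pred p | nib p == s]| = #|[predU A & B]|.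
  by apply: eq_card => p; rewrite !inE nib_eq.
have disj : #|[predI A & B]| = 0.
  apply: eq_card0 => p; rewrite !inE; apply/negP.
  case/andP => /andP[/eqP p1 /eqP s1] /existsP[i /andP[c /eqP E]].
  rewrite p1 s1 mulg1 in E.
  have := @tp_val m i i (ltn_ord i) (ltnW (ltn_ord i)).
  rewrite -E perm1 /= eqxx inordK; [lia|exact: ltnW (ltn_ord i)].
rewrite -[LHS]addn0 -disj cardUI; congr (_ + _).
  exact: cA.
have -> : #|B| = #|[set (tp m i * s)%g | i : 'I_m in [pred i : 'I_m | condf (pv s) i]]|.
  apply: eq_card => p; rewrite !inE; apply/existsP/imsetP.
    by case=> i /andP[c /eqP ->]; exists i.
  by case=> i c ->; exists i; rewrite eqxx andbT; move: c; rewrite inE.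
rewrite card_in_imset; last first.
  move=> i j _ _ /mulIg E.
  have := @tp_val m i i (ltn_ord i) (ltnW (ltn_ord i)).
  rewrite E tp_val; [|exact: ltn_ord|exact: ltnW (ltn_ord i)].
  move=> h; apply: val_inj => /=; move: h.
  rewrite eqxx; case: ifP => [/eqP -> //|_]; case: ifP => [/eqP e|_] h; lia.
rewrite /cnt big_mkord -sum1_card big_mkcond /=; apply: eq_bigr => i _.
by rewrite inE; case: condf.
Qed.

Lemma val_inord m k : (k <= m)%N -> val (inord k : 'I_m.+1) = k.
Proof. exact: inordK. Qed.

Lemma pv_lift m (s : 'S_m.+1) (j : 'I_m.+2) k : (k <= m)%N ->
  pv (lift_perm ord_max j s) k = bump j (pv s k).
Proof.
move=> km; rewrite /pv.
have -> : (inord k : 'I_m.+2) = lift ord_max (inord k : 'I_m.+1).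
  by apply: val_inj => /=; rewrite /bump !val_inord //; lia.
by have := @lift_perm_lift m.+1 ord_max j s (inord k) => /(congr1 val) /= ->.
Qed.

Lemma pv_lift_max m (s : 'S_m.+1) (j : 'I_m.+2) :
  pv (lift_perm ord_max j s) m.+1 = j.
Proof.
rewrite /pv; have -> : (inord m.+1 : 'I_m.+2) = ord_max by apply: val_inj; rewrite /= inordK.
by rewrite lift_perm_id.
Qed.

Lemma bump_lt j x : (bump j x < j)%N = (x < j)%N.
Proof. rewrite /bump; case: (leqP j x) => /= *; lia. Qed.

Lemma cnt_lift m (s : 'S_m.+1) (j : 'I_m.+2) :
  cnt (lift_perm ord_max j s) = cnt s + ((j == ord_max) && incb (pv s) m).
Proof.
rewrite /cnt big_nat_recr //=; congr (_ + _).
  apply: eq_big_nat => i /andP[_ im]; congr (nat_of_bool _).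
  apply: (condf_tr (g := bump j)); last exact: bump_mono.
  by move=> x xi; apply: pv_lift; lia.
rewrite /condf (incb_tr (f := pv s) (g := bump j)); last exact: bump_mono; last first.
  by move=> x xm; apply: pv_lift; lia.
rewrite pv_lift_max; congr (nat_of_bool (_ && _)).
have -> : [forall k : 'I_m.+1, (pv (lift_perm ord_max j s) k < j)%N] =
          [forall k : 'I_m.+1, (s k < j)%N].
  by apply: eq_forallb => k; rewrite pv_lift ?bump_lt ?pvE //; have := ltn_ord k.
apply/forallP/eqP.
  move=> H; have := H (s^-1 ord_max)%g; rewrite permKV /= => h.
  by apply: val_inj => /=; have := ltn_ord j; lia.
by move=> -> k /=; apply: ltn_ord.
Qed.

Lemma sum_lift m (F : 'S_m.+2 -> nat) : \sum_(p : 'S_m.+2) F p =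
  \sum_(j : 'I_m.+2) \sum_(s : 'S_m.+1) F (lift_perm ord_max j s).
Proof.
rewrite (partition_big (fun p : 'S_m.+2 => p ord_max) predT) //=.
apply: eq_bigr => j0 _.
pose i0 : 'I_m.+2 := ord_max.
rewrite (reindex (lift_perm i0 j0)); last first.
  pose ulsf i (s : 'S_m.+2) k := odflt k (unlift (s i) (s (lift i k))).
  have ulsfK i (s : 'S_m.+2) k: lift (s i) (ulsf i s k) = s (lift i k).
    rewrite /ulsf; have:= neq_lift i k.
    by rewrite -(can_eq (permK s)) => /unlift_some[] ? ? ->.
  have inj_ulsf: injective (ulsf i0 _).
    move=> s; apply: can_inj (ulsf (s i0) s^-1%g) _ => k'.
    by rewrite {1}/ulsf ulsfK !permK liftK.
  exists (fun s => perm (inj_ulsf s)) => [s _ | s].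
    by apply/permP=> k'; rewrite permE /ulsf lift_perm_lift lift_perm_id liftK.
  move/(s _ =P _) => si0; apply/permP=> k.
  case: (unliftP i0 k) => [k'|] ->; rewrite ?lift_perm_id //.
  by rewrite lift_perm_lift -si0 permE ulsfK.
by apply: eq_big => [s | s _]; first by rewrite lift_perm_id eqxx.
Qed.

Definition Gm m := \sum_(s : 'S_m.+1) (cnt s)^2.

Lemma cnt1 m : cnt (1%g : 'S_m.+1) = m.
Proof.
rewrite /cnt (eq_big_nat _ _ (F2 := fun _ => 1)) ?sum_nat_const_nat ?subn0 ?muln1 //.
move=> i /andP[_ im].
suff -> : condf (pv (1%g : 'S_m.+1)) i by [].
apply/andP; split.
  by apply/forallP => k; have hk := ltn_ord k; rewrite !pv1; lia.
apply/forallP => k'; apply/forallP => k.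
by have hk := ltn_ord k; have hk' := ltn_ord k'; rewrite !pv1; lia.
Qed.

Lemma incb_all m (t : 'S_m.+1) : incb (pv t) m.+1 = (t == 1%g).
Proof.
apply/idP/eqP.
  move=> /forallP H; apply: inc_perm1 => a b ab.
  by have := H b; move/forallP => /(_ (Ordinal ab)) /=; rewrite !pvE.
move=> ->; apply/forallP => k'; apply/forallP => k.
by have hk := ltn_ord k; have hk' := ltn_ord k'; rewrite !pv1; lia.
Qed.

Lemma incb1 m : incb (pv (1%g : 'S_m.+1)) m.
Proof.
apply/forallP => k'; apply/forallP => k.
by have hk := ltn_ord k; have hk' := ltn_ord k'; rewrite !pv1; lia.
Qed.

Lemma incb_lift m (t : 'S_m.+1) (j : 'I_m.+2) :
  incb (pv (lift_perm ord_max j t)) m.+1 = incb (pv t) m.+1.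
Proof.
apply: (incb_tr (g := bump j)); last exact: bump_mono.
by move=> x xm; apply: pv_lift.
Qed.

Lemma sqE (c : nat) (b : bool) : (c + b)^2 = c^2 + b * (2 * c + 1).
Proof. case: b => /=; nia. Qed.

Lemma Kval m : \sum_(s : 'S_m.+1) incb (pv s) m * (2 * cnt s + 1) = 2 * m^2 + m + 1.
Proof.
case: m => [|k].
  rewrite (eq_bigr (fun _ => 1)).
    by rewrite sum1_card card_Sn.
  move=> s _; have -> : incb (pv s) 0 by apply/forallP => -[].
  by rewrite /cnt big_geq.
rewrite sum_lift.
rewrite (eq_bigr (fun j : 'I_k.+2 => 2 * cnt (lift_perm ord_max j 1%g) + 1)); last first.
  move=> j _; rewrite (bigD1 1%g) //= big1 ?addn0.
    by rewrite incb_lift incb_all eqxx mul1n.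
  by move=> t /negbTE ne; rewrite incb_lift incb_all ne.
rewrite (bigD1 ord_max) //= cnt_lift cnt1 eqxx incb1 /=.
rewrite (eq_bigr (fun _ => 2 * k + 1)); last first.
  by move=> j /negbTE ne; rewrite cnt_lift cnt1 ne /= addn0.
rewrite sum_nat_const cardC1 card_ord /=; nia.
Qed.

Lemma Grec m : Gm m.+1 = m.+2 * Gm m + (2 * m^2 + m + 1).
Proof.
rewrite /Gm sum_lift.
rewrite (eq_bigr (fun j : 'I_m.+2 => Gm m + \sum_(s : 'S_m.+1)
     ((j == ord_max) && incb (pv s) m) * (2 * cnt s + 1))); last first.
  move=> j _; rewrite /Gm -big_split /=; apply: eq_bigr => s _.
  by rewrite cnt_lift sqE.
rewrite big_split /= sum_nat_const card_ord; congr (_ + _).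
rewrite (bigD1 ord_max) //= [X in _ + X = _]big1 ?addn0; last first.
  by move=> j /negbTE ne; apply: big1 => s _; rewrite ne.
by rewrite -Kval; apply: eq_bigr => s _; rewrite eqxx.
Qed.

Lemma Ssum m : \sum_(s : 'S_m.+1) (#|[pred p | nib p == s]|)^2 = Gm m + 2 * m + 1.
Proof.
rewrite (eq_bigr (fun s => (cnt s)^2 + (s == 1%g) * (2 * cnt s + 1))); last first.
  by move=> s _; rewrite fib_card addnC sqE.
rewrite big_split /= -/(Gm m) (bigD1 1%g) //= big1 ?addn0; last first.
  by move=> s /negbTE ->.
by rewrite eqxx cnt1; lia.
Qed.

Import Order.TTheory GRing.Theory Num.Theory.
Local Open Scope ring_scope.

Definition U (R : realType) (n : nat) : R :=
  4 * series (exp_coeff (1:R)) n.+1 - 9 + 2 / (n`!)%:R.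

Lemma fact_neq0 (R : realType) n : (n`!)%:R != 0 :> R.
Proof. by rewrite pnatr_eq0 -lt0n fact_gt0. Qed.

Lemma Ustep (R : realType) n :
  U R n.+1 = U R n - 2 / (n`!)%:R + 6 / ((n.+1)`!)%:R.
Proof.
rewrite /U seriesSr /exp_coeff /= expr1n.
have := fact_neq0 R n.+1; have := fact_neq0 R n.
rewrite factS natrM => h1 h2.
have h3 : (n.+1)%:R != 0 :> R by rewrite pnatr_eq0.
field; by rewrite h1 nat1r.
Qed.

Lemma deg_eq (R : realType) m :
  deg (@nib m.+1) = ((Gm m + 2 * m + 1)%:R / ((m.+1)`!)%:R :> R).
Proof. by rewrite /deg Ssum card_Sn. Qed.

Lemma GU (R : realType) m : (Gm m + 2 * m + 1)%:R / ((m.+1)`!)%:R = U R m.+1.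
Proof.
elim: m => [|m IH].
  have -> : Gm 0 = 0%N by rewrite /Gm big1 // => s _; rewrite /cnt big_geq.
  rewrite /U /series /= !big_nat_recr //= big_geq // /exp_coeff /=.
  rewrite !expr1n fact0 (_ : 1`! = 1)%N //= !divr1; lra.
rewrite Ustep -IH Grec !factS.
have h0 := fact_neq0 R m.
rewrite !(natrD, natrM, natrX).
set a := (m`!)%:R in h0 *.
rewrite -[m.+2%:R]nat1r -[m.+1%:R]nat1r.
have h1 : 1 + m%:R != 0 :> R by rewrite nat1r pnatr_eq0.
have h2 : 1 + (1 + m%:R) != 0 :> R by rewrite !nat1r pnatr_eq0.
by field; rewrite fact_neq0 h1 h2.
Qed.

Lemma Gm0 : Gm 0 = 0%N.
Proof. by rewrite /Gm big1 // => s _; rewrite /cnt big_geq. Qed.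

Lemma TU (R : realType) n : (1 <= n)%N ->
  ((n%:R - 1) * (n%:R - 2) ^+ 2 + n%:R ^+ 2) / (n`!)%:R
   + \sum_(1 <= k < n.-1) (k%:R * (k%:R ^+ 3 - k%:R + 1)) / ((k.+2)`!)%:R
  = U R n.
Proof.
have s10 N : \sum_(1 <= k < N) (k%:R * (k%:R ^+ 3 - k%:R + 1)) / ((k.+2)`!)%:R
    = \sum_(0 <= k < N) (k%:R * (k%:R ^+ 3 - k%:R + 1)) / ((k.+2)`!)%:R :> R.
  case: N => [|N]; first by rewrite !big_geq.
  by rewrite [RHS]big_ltn // !mul0r add0r.
elim: n => [//|n IH] _.
case: n IH => [|p] IH.
  rewrite big_geq // -(GU R 0) Gm0 subrr mul0r add0r expr1n addr0.
  by [].
rewrite s10 /= big_nat_recr //=.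
have := IH isT; rewrite s10 /= => IH'.
rewrite Ustep -IH' !factS.
have h0 := fact_neq0 R p.
rewrite !(natrD, natrM, natrX).
set a := (p`!)%:R in h0 *.
set S := \sum_(0 <= k < p) _.
rewrite -[p.+2%:R]nat1r -[p.+1%:R]nat1r.
have h1 : 1 + p%:R != 0 :> R by rewrite nat1r pnatr_eq0.
have h2 : 1 + (1 + p%:R) != 0 :> R by rewrite !nat1r pnatr_eq0.
by field; rewrite fact_neq0 h1 h2.
Qed.

Local Open Scope classical_set_scope.

Theorem mainTheorem11 (R : realType) :
  (forall n : nat, (1 <= n)%N ->
     deg (@nib n) =
       ((n%:R - 1) * (n%:R - 2) ^+ 2 + n%:R ^+ 2) / (n`!)%:R
       + \sum_(1 <= k < n.-1) (k%:R * (k%:R ^+ 3 - k%:R + 1)) / ((k.+2)`!)%:R :> R)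
  /\ ((fun n : nat => (deg (@nib n) : R)) @ \oo --> 4 * expR 1 - 9).
Proof.
split.
  move=> [//|m] _; by rewrite TU // deg_eq GU.
apply: (@cvg_trans R ((fun n => U R n) @ \oo)).
  apply: near_eq_cvg; exists 1%N => // -[//|m] _ /=.
  by rewrite deg_eq GU.
have h1 := @is_cvg_series_exp_coeff R 1.
have h2 := @cvg_exp_coeff R 1.
have h3 := cvgD (cvgB (cvgMl_tmp (a:=4) h1) (cvg_cst (9 : R^o))) (cvgMl_tmp (a:=6) h2).
have F : Filter (\oo : set_system nat) by apply: filter_class.
have {}h3 := h3 F F F F F.
rewrite -[4 * expR 1 - 9]addr0 -(mulr0 6).
apply: cvg_trans h3.
apply: near_eq_cvg; exists 0%N => // n _ /=.
rewrite /U seriesSr /exp_coeff /= !fctE /= !expr1n; lra.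
Qed.
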